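(* Let $K$ be a field of characteristic zero. For $0\le i\le n-1$ let $E_i$ be the injective hull of $K$ over $K[X_1,\ldots,X_i]$ ($E_0=K$), and let $E_{n-1}[X_n]=\bigoplus_{j\ge0}E_{n-1}X_n^j$ (which is isomorphic to $H^{n-1}_{(X_1,\ldots,X_{n-1})}(K[X_1,\ldots,X_n])$). Then for $c=1,\ldots,n$, \[H_i(\partial_c,\partial_{c+1},\ldots,\partial_n;E_{n-1}[X_n])=\begin{cases}0& i\ne1,\\ E_{c-1}& i=1.\end{cases}\]
   Context: $E_i=\bigoplus_{r_1,\ldots,r_i\ge0}K\,\frac{1}{X_1\cdots X_iX_1^{r_1}\cdots X_i^{r_i}}$, where $X_j$ lowers $r_j$ by one (giving $0$ if $r_j=0$) and $\partial_j$ sends the basis element with exponent $r_j$ to $(-r_j-1)$ times the one with $r_j$ replaced by $r_j+1$. On $E_{n-1}[X_n]$, $X_j,\partial_j$ ($j<n$) act on the $E_{n-1}$ factor and $X_n,\partial_n$ act on the polynomial variable $X_n$ by multiplication and differentiation. $H_i(\partial_c,\ldots,\partial_n;N)$ is the $i$-th Koszul homology with respect to the commuting $K$-linear maps $\partial_c,\ldots,\partial_n$. *)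

(* Defs.v *)
From mathcomp Require Import all_boot all_order all_algebra.
Set Implicit Arguments. Unset Strict Implicit. Unset Printing Implicit Defensive.
Import GRing.Theory.
Local Open Scope ring_scope.

(* Exponent vectors (r_1,...,r_p) of the basis element 1/(X_1..X_p X_1^r_1..X_p^r_p) of E_p. *)
Definition Idx (p : nat) := {ffun 'I_p -> nat}.

(* Variables are numbered from 0: variable j is the paper's X_{j+1}. *)
Definition updE p (j : nat) (s : nat -> nat) (r : Idx p) : Idx p :=
  [ffun i : 'I_p => if val i == j then s (r i) else r i].
Definition getE p (r : Idx p) (j : nat) : nat := (\sum_(i : 'I_p | val i == j) r i)%N.

(* Elements of E_p (or of any space with basis T): coefficient functions with finite support. *)
Definition finsupp (K : fieldType) (T : eqType) (f : T -> K) : Prop :=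
  exists s : seq T, forall x, x \notin s -> f x = 0.

(* Action of X_j and d_j (j < p) on E_p, in coefficient form:
   X_j lowers r_j (killing r_j = 0), d_j sends exponent r_j to (-r_j-1) * exponent r_j+1. *)
Definition Xe (K : fieldType) p (j : nat) (f : Idx p -> K) : Idx p -> K :=
  fun r => f (updE j S r).
Definition De (K : fieldType) p (j : nat) (f : Idx p -> K) : Idx p -> K :=
  fun r => - (getE r j)%:R * f (updE j predn r).

(* E_{n-1}[X_n]: basis indexed by (r, k) <-> e_r * X_n^k. *)
Definition EP (n : nat) := (Idx n.-1 * nat)%type.

Definition DP (K : fieldType) n (g : EP n -> K) : EP n -> K :=
  fun x => (x.2.+1)%:R * g (x.1, x.2.+1).

(* d_v on E_{n-1}[X_n], v = 0..n-1 (v = n-1 is d_n). *)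
Definition Dfull (K : fieldType) n (v : nat) (g : EP n -> K) : EP n -> K :=
  if (v < n.-1)%N then fun x => De v (fun r => g (r, x.2)) x.1 else DP g.
Definition Xfull (K : fieldType) n (v : nat) (g : EP n -> K) : EP n -> K :=
  fun x => Xe v (fun r => g (r, x.2)) x.1.

(* Koszul complex of d_c,...,d_n (m = n-c+1 maps; map t : 'I_m is d_{c+t},
   i.e. 0-based variable c-1+t).  A chain assigns to each subset S of 'I_m
   the coefficient of e_S. *)
Definition chainT (K : fieldType) n c := {set 'I_(n.+1 - c)} -> EP n -> K.

Definition koszul_d (K : fieldType) n c (w : chainT K n c) : chainT K n c :=
  fun S x => \sum_(t : 'I_(n.+1 - c) | t \notin S)
     (-1) ^+ #|[set s in S | (s < t)%N]| * Dfull (c.-1 + t) (w (t |: S)) x.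

Definition is_chain (K : fieldType) n c (i : nat) (w : chainT K n c) : Prop :=
  (forall S : {set 'I_(n.+1 - c)}, #|S| != i -> forall x, w S x = 0) /\ (forall S, finsupp (w S)).

Definition is_cycle (K : fieldType) n c (i : nat) (w : chainT K n c) : Prop :=
  is_chain i w /\ forall S x, koszul_d w S x = 0.

Definition is_boundary (K : fieldType) n c (i : nat) (w : chainT K n c) : Prop :=
  exists u : chainT K n c, is_chain i.+1 u /\ forall S x, w S x = koszul_d u S x.

(* Main.v *)
Require Import Defs.
From mathcomp Require Import all_boot all_order all_algebra.
From Stdlib Require Import FunctionalExtensionality Lia.
From mathcomp Require Import zify ring.
Import GRing.Theory.
Local Open Scope ring_scope.
Set Implicit Arguments. Unset Strict Implicit.

Lemma getE_ord p (r : Idx p) (i : 'I_p) : getE r i = r i.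
Proof.
rewrite /getE (big_pred1 i) // => j /=; by rewrite -val_eqE.
Qed.

Lemma getE_big p (r : Idx p) j : (p <= j)%N -> getE r j = 0%N.
Proof.
move=> hj; rewrite /getE big_pred0 // => i; apply/negbTE.
by apply/eqP => e; move: (ltn_ord i); rewrite e ltnNge hj.
Qed.

Lemma idx_eq p (r r' : Idx p) : (forall j, getE r j = getE r' j) -> r = r'.
Proof. by move=> h; apply/ffunP => i; rewrite -!getE_ord h. Qed.

Lemma getE_updE p j s (r : Idx p) j' :
  getE (updE j s r) j' = if (j' == j) && (j < p)%N then s (getE r j) else getE r j'.
Proof.
case: (ltnP j' p) => hj'.
  have ->: j' = val (Ordinal hj') by [].
  rewrite !getE_ord /updE ffunE /=.
  have [e|ne] := eqVneq j' j => //=; subst j.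
  rewrite hj'; congr s; exact: (esym (getE_ord r (Ordinal hj'))).
rewrite getE_big //; have [e|ne] := eqVneq j' j => /=; last by rewrite getE_big.
by subst j'; rewrite ltnNge hj' /= getE_big.
Qed.

Lemma updE_comp p j s s' (r : Idx p) : updE j s (updE j s' r) = updE j (fun a => s (s' a)) r.
Proof. by apply/ffunP => i; rewrite !ffunE; case: eqP. Qed.

Lemma updE_id p j s (r : Idx p) : s (getE r j) = getE r j -> updE j s r = r.
Proof.
move=> h; apply: idx_eq => j'; rewrite getE_updE.
by case: eqP => [->|] //=; case: ifP.
Qed.

Lemma updE_comm p j j' s s' (r : Idx p) : j != j' ->
  updE j s (updE j' s' r) = updE j' s' (updE j s r).
Proof.
move=> ne; apply/ffunP => i; rewrite !ffunE.
case: eqP => [e1|]; case: eqP => [e2|] //.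
by move: ne; rewrite -e1 -e2 eqxx.
Qed.

Section Main.
Variables (K : fieldType) (n c : nat).
Hypothesis Hchar : [pchar K] =i pred0.
Hypothesis Hc1 : (1 <= c)%N.
Hypothesis Hcn : (c <= n)%N.

Local Notation m := (n.+1 - c)%N.
Local Notation vv t := (c.-1 + t)%N.

Definition isE (t : nat) : bool := (c.-1 + t < n.-1)%N.

Lemma isEE t : isE t = (t.+1 < m)%N.
Proof. rewrite /isE; apply/idP/idP => /ltP h; apply/ltP; lia. Qed.

Lemma Lp : (m.-1 < m)%N.
Proof. apply/ltP; lia. Qed.
Definition L : 'I_m := Ordinal Lp.

Lemma isEL : isE m.-1 = false.
Proof. rewrite isEE; apply/negbTE; rewrite -leqNgt; apply/leP; lia. Qed.

Definition dc t (x : EP n) : K := if isE t then - (getE x.1 (vv t))%:R else (x.2.+1)%:R.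
Definition dp t (x : EP n) : EP n := if isE t then (updE (vv t) predn x.1, x.2) else (x.1, x.2.+1).
Definition hc t (x : EP n) : K :=
  if isE t then - ((getE x.1 (vv t)).+1%:R)^-1 else (if x.2 is k.+1 then (k.+1%:R)^-1 else 0).
Definition hp t (x : EP n) : EP n := if isE t then (updE (vv t) S x.1, x.2) else (x.1, x.2.-1).
Definition hinv t (x : EP n) : EP n := if isE t then (updE (vv t) predn x.1, x.2) else (x.1, x.2.+1).
Definition Qb t (r : Idx n.-1) : bool := all (fun s => getE r (vv s) == 0%N) (iota 0 t).
Definition qc t (x : EP n) : K := (Qb t x.1)%:R * hc t x.

Lemma Dfull_mon t (g : EP n -> K) x : Dfull (vv t) g x = dc t x * g (dp t x).
Proof. by rewrite /Dfull /dc /dp /isE; case: ifP => _; rewrite /De /DP. Qed.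

Lemma nat1_neq0 k : (k.+1)%:R != 0 :> K.
Proof. by have /pcharf0P -> := Hchar. Qed.

Lemma nat1_neq0' k : 1 + k%:R != 0 :> K.
Proof. by rewrite addrC natr1 nat1_neq0. Qed.

Lemma Qb0 r : Qb 0 r. Proof. by []. Qed.
Lemma QbS t r : Qb t.+1 r = Qb t r && (getE r (vv t) == 0%N).
Proof. by rewrite /Qb -addn1 iotaD all_cat /= andbT. Qed.
Lemma Qb_upd t j s r : (vv t <= j)%N -> Qb t (updE j s r) = Qb t r.
Proof.
move=> h; apply: eq_in_all => s' /=; rewrite mem_iota /= add0n => hs.
rewrite getE_updE; have -> : (vv s' == j) = false by apply/eqP; lia.
by [].
Qed.
Lemma Qb_get t r s : Qb t r -> (s < t)%N -> getE r (vv s) = 0%N.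
Proof.
by move=> /allP h hs; apply/eqP; apply: h; rewrite mem_iota /= add0n.
Qed.

Lemma updE_SP p j (r : Idx p) : updE j predn (updE j S r) = r.
Proof. by rewrite updE_comp updE_id. Qed.
Lemma updE_PS p j (r : Idx p) b : getE r j = b.+1 -> updE j S (updE j predn r) = r.
Proof. by move=> h; rewrite updE_comp updE_id // h. Qed.

Lemma termE t (g : EP n -> K) x : isE t ->
  dc t x * (qc t (dp t x) * g (hp t (dp t x))) = (Qb t x.1)%:R * g x - (Qb t.+1 x.1)%:R * g x.
Proof.
case: x => r k /= he; rewrite /dc /qc /hc /hp /dp he /= QbS Qb_upd // getE_updE eqxx.
have hlt : (vv t < n.-1)%N by [].
rewrite hlt /=.
case e: (getE r (vv t)) => [|b] /=; first by rewrite andbT oppr0 mul0r subrr.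
have -> : (b.+1 == 0%N) = false by [].
rewrite andbF mul0r subr0 (updE_PS e).
case: (Qb t r); rewrite ?mul0r ?mulr0 ?mul1r //.
by rewrite mulrA mulrNN mulfV ?mul1r // nat1_neq0.
Qed.

Lemma termL (g : EP n -> K) x :
  dc m.-1 x * (qc m.-1 (dp m.-1 x) * g (hp m.-1 (dp m.-1 x))) = (Qb m.-1 x.1)%:R * g x.
Proof.
case: x => r k; rewrite /dc /qc /hc /hp /dp isEL /=.
by field; rewrite nat1_neq0'.
Qed.

Lemma telescope u (g : EP n -> K) x : (u <= m.-1)%N ->
  \sum_(0 <= t < u) dc t x * (qc t (dp t x) * g (hp t (dp t x))) = g x - (Qb u x.1)%:R * g x.
Proof.
elim: u => [|u IH] hu; first by rewrite big_nil mul1r subrr.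
rewrite big_nat_recr //= IH; last by apply: ltnW.
rewrite termE; last by rewrite isEE; apply/ltP; move/leP: hu; lia.
by rewrite addrA subrK.
Qed.

Lemma diagE u (g : EP n -> K) x : isE u ->
  qc u x * (dc u (hp u x) * g (dp u (hp u x))) = (Qb u x.1)%:R * g x.
Proof.
case: x => r k he; have hlt : (vv u < n.-1)%N := he.
rewrite /dc /qc /hc /hp /dp he /= updE_SP getE_updE eqxx hlt /=.
by field; rewrite nat1_neq0'.
Qed.

Lemma diagL (g : EP n -> K) x :
  qc m.-1 x * (dc m.-1 (hp m.-1 x) * g (dp m.-1 (hp m.-1 x))) = (Qb m.-1 x.1 && (x.2 != 0%N))%:R * g x.
Proof.
case: x => r [|k]; rewrite /dc /qc /hc /hp /dp isEL /=; first by rewrite /= andbF !mulr0 !mul0r.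
rewrite /= andbT; by field; rewrite nat1_neq0'.
Qed.

Lemma comm_pt u t x : isE u -> (u < t)%N -> hp u (dp t x) = dp t (hp u x).
Proof.
case: x => r k he hut; rewrite /hp /dp he /=; case: ifP => //= _.
rewrite updE_comm //; apply/eqP => e; move/ltP: hut; lia.
Qed.

Lemma comm_coef u t x : isE u -> (u < t)%N -> dc t x * qc u (dp t x) = qc u x * dc t (hp u x).
Proof.
case: x => r k he hut; rewrite /dc /qc /hc /hp /dp he /=; case: ifP => /= ht.
  rewrite Qb_upd; last by apply/leP; move/ltP: hut; lia.
  rewrite !getE_updE; have ne1: (vv u == vv t) = false by apply/eqP => e; move/ltP: hut; lia.
  case: ifP => [/andP[/eqP e _]|_]; first by exfalso; lia.
  case: ifP => [/andP[/eqP e _]|_]; first by exfalso; lia.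
  by rewrite mulrC.
by rewrite mulrC.
Qed.

Lemma qc_dc_lt u t x : (u < m)%N -> (t < u)%N -> qc u x * dc t (hp u x) = 0.
Proof.
case: x => r k hum htu; rewrite /qc.
case hQ: (Qb u r); last by rewrite /= !mul0r.
have htE : isE t by rewrite isEE; lia.
have h0 := Qb_get hQ htu.
rewrite /dc /hp htE; case: ifP => _ /=; last by rewrite h0 oppr0 !mulr0.
rewrite getE_updE; have -> : (vv t == vv u) = false by apply/eqP; lia.
by rewrite /= h0 oppr0 !mulr0.
Qed.

Definition minS (A : {set 'I_m}) := [pick u in A | [forall s in A, (u <= s)%N]].

Definition Hw (w : chainT K n c) : chainT K n c :=
  fun A x => if minS A is Some u then qc u x * w (A :\ u) (hp u x) else 0.

Definition sg (A : {set 'I_m}) (t : 'I_m) : K := (-1) ^+ #|[set s in A | (s < t)%N]|.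

Definition Pw (w : chainT K n c) : chainT K n c :=
  fun A x => if (A == [set L]) && Qb m.-1 x.1 && (x.2 == 0%N) then w A x else 0.

Lemma minS_some (A : {set 'I_m}) (u : 'I_m) : u \in A -> (forall s : 'I_m, s \in A -> (u <= s)%N) -> minS A = Some u.
Proof.
move=> uA hu; rewrite /minS; case: pickP => [u' /andP [u'A /forallP h']|].
  congr Some; apply: val_inj; apply/eqP; rewrite eqn_leq.
  by rewrite hu // andbT; move: (h' u); rewrite uA.
move/(_ u); rewrite uA /=; move/negbT/negP; case; apply/forallP => s.
by apply/implyP => sA; apply: hu.
Qed.

Lemma minS0 : minS set0 = None.
Proof. by rewrite /minS; case: pickP => // u; rewrite inE. Qed.

Lemma Hw_min w (A : {set 'I_m}) (u : 'I_m) y : u \in A -> (forall s : 'I_m, s \in A -> (u <= s)%N) ->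
  Hw w A y = qc u y * w (A :\ u) (hp u y).
Proof. by move=> uA hu; rewrite /Hw (minS_some uA hu). Qed.

Lemma sg_le (A : {set 'I_m}) (u t : 'I_m) : (forall s : 'I_m, s \in A -> (u <= s)%N) -> (t <= u)%N -> sg A t = 1.
Proof.
move=> hu htu; rewrite /sg; suff -> : [set s in A | (s < t)%N] = set0 by rewrite cards0.
apply/setP => s; rewrite !inE; case sA: (s \in A) => //=.
by apply/negbTE; rewrite -leqNgt; apply: leq_trans htu (hu _ sA).
Qed.

Lemma sg_gt (A : {set 'I_m}) (u t : 'I_m) : u \in A -> (u < t)%N -> sg A t = - sg (A :\ u) t.
Proof.
move=> uA hut; rewrite /sg.
have -> : [set s in A | (s < t)%N] = u |: [set s in A :\ u | (s < t)%N].
  apply/setP => s; rewrite !inE; case: (eqVneq s u) => [->|] //=; by rewrite uA hut.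
rewrite cardsU1 !inE eqxx /= exprD expr1 mulN1r.
by [].
Qed.

Lemma kosE (w : chainT K n c) A x :
  koszul_d w A x = \sum_(t | t \notin A) sg A t * (dc t x * w (t |: A) (dp t x)).
Proof. by apply: eq_bigr => t _; rewrite Dfull_mon. Qed.

Lemma cross w (A : {set 'I_m}) (u0 t : 'I_m) x : u0 \in A -> (forall s : 'I_m, s \in A -> (u0 <= s)%N) ->
  (u0 < t)%N ->
  sg A t * (dc t x * Hw w (t |: A) (dp t x)) +
  qc u0 x * (sg (A :\ u0) t * (dc t (hp u0 x) * w (t |: (A :\ u0)) (dp t (hp u0 x)))) = 0.
Proof.
move=> u0A hmin hut.
have hE : isE u0 by rewrite isEE; have := ltn_ord t; lia.
rewrite (sg_gt u0A hut) (@Hw_min w _ u0 _); first last.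
- move=> s; rewrite !inE => /orP [/eqP ->|/hmin //]; exact: ltnW.
- by rewrite !inE u0A orbT.
have -> : (t |: A) :\ u0 = t |: (A :\ u0).
  apply/setP => s; rewrite !inE; case: (eqVneq s t) => [->|] //=.
  by rewrite andbT; apply/eqP => e; move: hut; rewrite e ltnn.
rewrite comm_pt // (mulrA (dc t x)) comm_coef //.
set W := w _ _; set q := qc _ _; set d := dc _ _; set s := sg _ _.
ring.
Qed.

Lemma homot w (A : {set 'I_m}) x : koszul_d (Hw w) A x + Hw (koszul_d w) A x = w A x - Pw w A x.
Proof.
have [->|/set0Pn [u1 u1A]] := eqVneq A set0.
  rewrite {2}/Hw minS0 addr0 /Pw.
  have -> : (set0 == [set L]) = false.
    by apply/negbTE/eqP => e; move: (set11 L); rewrite -e inE.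
  rewrite /= subr0 kosE.
  transitivity (\sum_(t < m) dc t x * (qc t (dp t x) * w set0 (hp t (dp t x)))).
    apply: eq_big => [t|t _]; first by rewrite inE.
    rewrite (@sg_le _ t _) ?mul1r //; last by move=> s; rewrite inE.
    rewrite (@Hw_min w _ t _); first by rewrite setU1K // inE.
      by rewrite setU11.
    by move=> s; rewrite setU0 inE => /eqP ->.
  have hm : m = m.-1.+1 by lia.
  transitivity (\sum_(0 <= t < m.-1.+1) dc t x * (qc t (dp t x) * w set0 (hp t (dp t x)))).
    by rewrite -hm big_mkord.
  rewrite big_nat_recr //= telescope // termL.
  by rewrite subrK.
case: (arg_minnP (fun u : 'I_m => val u) u1A) => u0 u0A' hmin'.
have u0A : u0 \in A by [].
have hmin : forall s : 'I_m, s \in A -> (u0 <= s)%N by move=> s sA; apply: hmin'.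
clear u0A' hmin'.
rewrite (Hw_min _ _ u0A hmin) !kosE.
rewrite [X in _ + _ * X](bigD1 u0) /=; last by rewrite !inE eqxx.
rewrite (@sg_le (A :\ u0) u0 u0) ?mul1r //; last by move=> s; rewrite !inE => /andP [_ /hmin].
rewrite (setD1K u0A).
set y := hp u0 x.
rewrite mulrDr mulr_sumr.
rewrite [X in _ + (_ + X)](eq_bigl (fun t => t \notin A)); last first.
  move=> t; rewrite !inE; case: (eqVneq t u0) => [->|] /=; first by rewrite u0A.
  by rewrite andbT.
rewrite addrCA -big_split /=.
rewrite (bigID (fun t : 'I_m => (t < u0)%N)) /=.
rewrite [X in _ + (_ + X)]big1; last first.
  move=> t /andP [tA]; rewrite -leqNgt leq_eqVlt => /orP [/eqP e|hut].
    by move: tA; rewrite (_ : t = u0) ?u0A //; apply: val_inj.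
  exact: cross.
rewrite addr0.
pose F := fun t : nat => dc t x * (qc t (dp t x) * w A (hp t (dp t x))).
have hS : \sum_(t < m | (t \notin A) && (t < u0)%N)
    (sg A t * (dc t x * Hw w (t |: A) (dp t x)) +
     qc u0 x * (sg (A :\ u0) t * (dc t y * w (t |: A :\ u0) (dp t y))))
    = \sum_(t < m | (t < u0)%N) F t.
  apply: eq_big => [t|t /andP [tA htu]].
    case htu: (t < u0)%N; rewrite ?andbF ?andbT //.
    by apply/negP => tA; move: (hmin _ tA); lia.
  rewrite (@sg_le A u0 t) ?mul1r //; last exact: ltnW.
  rewrite (@Hw_min w _ t _); first last.
  - move=> s; rewrite !inE => /orP [/eqP -> //|/hmin]; lia.
  - by rewrite setU11.
  rewrite setU1K // /y [X in _ + X]mulrCA (mulrA (qc u0 x) (dc t (hp u0 x))) qc_dc_lt // mul0r mulr0 addr0.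
  by [].
rewrite hS -(big_ord_widen m F (ltnW (ltn_ord u0))).
have -> : \sum_(t < u0) F t = \sum_(0 <= t < u0) F t by rewrite big_mkord.
rewrite telescope; last by have := ltn_ord u0; lia.
case hE: (isE u0).
  rewrite diagE // /Pw.
  have -> : (A == [set L]) = false.
    apply/negbTE/eqP => e; move: u0A; rewrite e inE => /eqP e'.
    by move: hE; rewrite e' /= isEL.
  by rewrite /= subr0 addrC subrK.
have hu0 : nat_of_ord u0 = m.-1.
  move: hE; rewrite isEE; have := ltn_ord u0; lia.
have eA : A = [set L].
  apply/setP => s; rewrite inE; apply/idP/eqP => [sA|->].
    apply: val_inj => /=; have := hmin _ sA; have := ltn_ord s; lia.
  by have -> : L = u0 by apply: val_inj; rewrite /= hu0.
rewrite /y hu0 diagL /Pw eA eqxx /=.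
case: (Qb _ _); case: (x.2 == 0%N); rewrite /= ?mul0r ?mul1r ?subr0 ?add0r ?addr0 ?subrr //; by rewrite addr0.
Qed.

Lemma hinvK u x : qc u x != 0 -> hinv u (hp u x) = x.
Proof.
case: x => r k; rewrite /qc /hc /hinv /hp; case: ifP => hE /=; first by rewrite updE_SP.
by case: k => [|k] //=; rewrite mulr0 eqxx.
Qed.

Lemma Hw_fin w : (forall A, finsupp (w A)) -> forall A, finsupp (Hw w A).
Proof.
move=> hf A; rewrite /finsupp /Hw; case: (minS A) => [u|]; last by exists [::].
case: (hf (A :\ u)) => s hs; exists (map (hinv u) s) => x hx.
case: (eqVneq (qc u x) 0) => [->|hq]; first by rewrite mul0r.
rewrite hs ?mulr0 //; apply: contra hx => hin; rewrite -(hinvK hq); exact: map_f.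
Qed.

Lemma Hw_deg i w : (forall A : {set 'I_m}, #|A| != i -> forall x, w A x = 0) ->
  forall A : {set 'I_m}, #|A| != i.+1 -> forall x, Hw w A x = 0.
Proof.
move=> hw A hA x; rewrite /Hw /minS; case: pickP => [u /andP [uA _]|] //.
rewrite hw ?mulr0 //; apply: contra hA; rewrite (cardsD1 u A) uA => /eqP ->; by [].
Qed.

Lemma Hw_zero g (A : {set 'I_m}) x : (forall A x, g A x = 0) -> Hw g A x = 0.
Proof. by move=> h; rewrite /Hw; case: minS => // u; rewrite h mulr0. Qed.

Lemma part1 i (w : chainT K n c) : i != 1%N -> is_cycle i w -> is_boundary i w.
Proof.
move=> hi [[hdeg hfin] hcyc]; exists (Hw w); split; first split.
- exact: Hw_deg.
- exact: Hw_fin.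
move=> A x; have := homot w A x; rewrite Hw_zero // addr0 => ->.
rewrite /Pw; case: ifP => [/andP [/andP [/eqP eA _] _]|_]; last by rewrite subr0.
by rewrite hdeg ?subr0 // eA cards1 eq_sym.
Qed.

Definition extE (r : Idx c.-1) : Idx n.-1 := [ffun i : 'I_n.-1 => getE r i].
Definition resE (r : Idx n.-1) : Idx c.-1 := [ffun i : 'I_c.-1 => getE r i].
Definition fmap (w : chainT K n c) (r : Idx c.-1) : K := w [set L] (extE r, 0%N).
Definition w0 (e : Idx c.-1 -> K) : chainT K n c := fun A x =>
  if (A == [set L]) && (x.2 == 0%N) && (x.1 == extE (resE x.1)) then e (resE x.1) else 0.

Lemma getE_extE r j : getE (extE r) j = getE r j.
Proof.
case: (ltnP j n.-1) => h.
  have -> : j = val (Ordinal h) by [].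
  by rewrite getE_ord ffunE.
rewrite !getE_big //; lia.
Qed.

Lemma getE_resE r j : getE (resE r) j = if (j < c.-1)%N then getE r j else 0%N.
Proof.
case: (ltnP j c.-1) => h.
  have -> : j = val (Ordinal h) by [].
  by rewrite getE_ord ffunE.
by rewrite !getE_big.
Qed.

Lemma resE_extE r : resE (extE r) = r.
Proof.
apply: idx_eq => j; rewrite getE_resE getE_extE; case: ifP => // h.
by rewrite getE_big // leqNgt h.
Qed.

Lemma extE_resE r : Qb m.-1 r -> extE (resE r) = r.
Proof.
move=> hQ; apply: idx_eq => j; rewrite getE_extE getE_resE; case: ifP => // h.
case: (ltnP j n.-1) => h2; last by rewrite getE_big.
have e : j = vv (j - c.-1) by move: h; lia.
rewrite e (Qb_get hQ) //; move: h; lia.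
Qed.

Lemma updE_extE j s r : (j < c.-1)%N -> updE j s (extE r) = extE (updE j s r).
Proof.
move=> h; apply: idx_eq => j'; rewrite getE_updE !getE_extE getE_updE.
by rewrite (_ : (j < n.-1)%N = true) ?h //; lia.
Qed.

Lemma part2 :
  (exists f : chainT K n c -> Idx c.-1 -> K,
     [/\ forall (a : K) (w1 w2 : chainT K n c), is_cycle 1 w1 -> is_cycle 1 w2 ->
           forall r, f (fun S x => a * w1 S x + w2 S x) r = a * f w1 r + f w2 r,
         forall w, is_cycle 1 w -> finsupp (f w),
         forall e : Idx c.-1 -> K, finsupp e ->
           exists w, is_cycle 1 w /\ forall r, f w r = e r,
         forall w, is_cycle 1 w -> ((forall r, f w r = 0) <-> is_boundary 1 w) &
         forall j : nat, (j < c.-1)%N -> forall w, is_cycle 1 w ->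
           (forall r, f (fun S => @Xfull K n j (w S)) r = Xe j (f w) r) /\
           (forall r, f (fun S => @Dfull K n j (w S)) r = De j (f w) r)]).
Proof.
exists fmap; split.
- by [].
- move=> w [[_ hfin] _]; case: (hfin [set L]) => s hs.
  exists (map (fun y : EP n => resE y.1) s) => r hr; rewrite /fmap hs //.
  apply: contra hr => hin; rewrite -[r]resE_extE.
  exact: (map_f (fun y : EP n => resE y.1) hin).
- move=> e [s hs]; exists (w0 e); split; last first.
    by move=> r; rewrite /fmap /w0 eqxx /= resE_extE eqxx.
  split; first split.
  + move=> A hA x; rewrite /w0; case: ifP => // /andP [/andP [/eqP eA _] _].
    by move: hA; rewrite eA cards1.
  + move=> A; exists (map (fun r => (extE r, 0%N)) s) => x hx.
    rewrite /w0; case: ifP => // /andP [/andP [_ /eqP h2] /eqP h1].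
    rewrite hs //; apply: contra hx => hin.
    rewrite (surjective_pairing x) h2 h1.
    exact: (map_f (fun r => (extE r, 0%N)) hin).
  + move=> A x; rewrite kosE; apply: big1 => t tA.
    rewrite /w0; case: ifP => [/andP [/andP [/eqP eL h2] _]|]; last by rewrite !mulr0.
    have : t \in [set L] by rewrite -eL setU11.
    rewrite inE => /eqP ht; move: h2; rewrite /dp ht /= isEL.
    by [].
- move=> w [[hdeg hfin] hcyc]; split => [hz|[u [_ hu]] r].
    exists (Hw w); split; first split.
    + exact: Hw_deg.
    + exact: Hw_fin.
    move=> A x.
    have hP : Pw w A x = 0.
      rewrite /Pw; case: ifP => // /andP [/andP [/eqP eA hQ] /eqP h2].
      rewrite eA; case: x hQ h2 => r k /= hQ ->.
      by have := hz (resE r); rewrite /fmap extE_resE.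
    by have := homot w A x; rewrite Hw_zero // addr0 hP subr0.
  rewrite /fmap hu kosE; apply: big1 => t tL.
  have hE : isE t.
    rewrite isEE; move: tL; rewrite inE => tL.
    have : nat_of_ord t != m.-1 by apply: contra tL => /eqP e; apply/eqP; apply: val_inj.
    have := ltn_ord t; lia.
  rewrite /dc hE /= getE_extE getE_big ?oppr0 ?mul0r ?mulr0 //; lia.
- move=> j hj w _; split => r.
    by rewrite /fmap /Xfull /Xe /= updE_extE.
  rewrite /fmap /Dfull (_ : (j < n.-1)%N = true); last lia.
  by rewrite /De /= getE_extE updE_extE.
Qed.

End Main.

Theorem lemma4p2 (K : fieldType) (n c : nat) :
  [pchar K] =i pred0 -> (1 <= c <= n)%N ->
  (* H_i = 0 for i <> 1 *)
  (forall i : nat, i != 1%N ->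
     forall w : chainT K n c, is_cycle i w -> is_boundary i w) /\
  (* H_1 ~= E_{c-1}, as modules over K<X_1..X_{c-1}, d_1..d_{c-1}> *)
  (exists f : chainT K n c -> Idx c.-1 -> K,
     [/\ forall (a : K) (w1 w2 : chainT K n c), is_cycle 1 w1 -> is_cycle 1 w2 ->
           forall r, f (fun S x => a * w1 S x + w2 S x) r = a * f w1 r + f w2 r,
         forall w, is_cycle 1 w -> finsupp (f w),
         forall e : Idx c.-1 -> K, finsupp e ->
           exists w, is_cycle 1 w /\ forall r, f w r = e r,
         forall w, is_cycle 1 w -> ((forall r, f w r = 0) <-> is_boundary 1 w) &
         forall j : nat, (j < c.-1)%N -> forall w, is_cycle 1 w ->
           (forall r, f (fun S => @Xfull K n j (w S)) r = Xe j (f w) r) /\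
           (forall r, f (fun S => @Dfull K n j (w S)) r = De j (f w) r)]).
Proof.
move=> hch /andP [hc1 hcn]; split.
  move=> i hi w hw; exact: (part1 hch hc1 hcn hi hw).
exact: (part2 hch hc1 hcn).
Qed.
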